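(* Let $\mathcal{G}$ be an ordered groupoid and let $\alpha=(A_g,\alpha_g)_{g\in\mathcal{G}}$ be a preunital partial ordered (P.O.) action of $\mathcal{G}$ on a ring $A$. Then $\alpha$ has a globalization $\beta$ if and only if $\alpha$ is unital.
   Context: A groupoid $\mathcal{G}$ is a small category in which every morphism is invertible; $\mathcal{G}_0\subseteq\mathcal{G}$ denotes the set of identities (objects), $d(g)=g^{-1}g$, $r(g)=gg^{-1}$, and $\mathcal{G}_2=\{(g,h): gh \text{ is defined}\}$. $\mathcal{G}$ is ordered if it carries a partial order $\le$ such that: (OG1) $g\le h\Rightarrow g^{-1}\le h^{-1}$; (OG2) if $g\le h$, $k\le \ell$, and $gk$, $h\ell$ are defined, then $gk\le h\ell$; (OG3) for $g\in\mathcal{G}$, $e\in\mathcal{G}_0$ with $e\le d(g)$ there is a unique $(g|e)\le g$ with $d(g|e)=e$; (OG3* ) for $e\le r(g)$ there is a unique $(e|g)\le g$ with $r(e|g)=e$. A partial action $\alpha=(A_g,\alpha_g)_{g\in\mathcal{G}}$ of $\mathcal{G}$ on a ring $A$ consists of ideals $A_{r(g)}$ of $A$, ideals $A_g$ of $A_{r(g)}$ and ring isomorphisms $\alpha_g:A_{g^{-1}}\to A_g$ such that: (P1) $\alpha_e=\mathrm{Id}_{A_e}$ for $e\in\mathcal{G}_0$ and $A=\sum_{e\in\mathcal{G}_0}A_e$; (P2) $\alpha_h^{-1}(A_{g^{-1}}\cap A_h)\subseteq A_{(gh)^{-1}}$ for $(g,h)\in\mathcal{G}_2$; (P3) $\alpha_g\alpha_h(a)=\alpha_{gh}(a)$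 for $(g,h)\in\mathcal{G}_2$, $a\in\alpha_h^{-1}(A_{g^{-1}}\cap A_h)$. It is a P.O. action if moreover (PO): $g\le h$ implies $A_g\subseteq A_h$ and $\alpha_g=\alpha_h|_{A_{g^{-1}}}$. It is unital if every $A_g$ is generated by (i.e. equals $A1_g$ for) a central idempotent $1_g$ of $A$; it is preunital if every $A_e$, $e\in\mathcal{G}_0$, is a unital ring whose identity $1_e$ is a central idempotent of $A$. A global action is a partial action with $A_g=A_{r(g)}$ for all $g$; an ordered global action is a global action satisfying (PO). A globalization of a P.O. action $\alpha$ on $A$ is an ordered global action $\beta=(B_g,\beta_g)_{g\in\mathcal{G}}$ of $\mathcal{G}$ on a ring $B$ together with injective ring homomorphisms $\varphi_e:A_e\to B_e$ ($e\in\mathcal{G}_0$) such that: (i) $\varphi_e(A_e)$ is an ideal of $B_e$; (ii) $\varphi_{r(g)}(A_g)=\varphi_{r(g)}(A_{r(g)})\cap\beta_g(\varphi_{d(g)}(A_{d(g)}))$ for all $g$; (iii) $\beta_g\circ\varphi_{d(g)}(a)=\varphi_{r(g)}\circ\alpha_g(a)$ for all $g$, $a\in A_{g^{-1}}$; (iv) $B_g=\sum_{r(h)\le r(g)}\beta_h(\varphi_{d(h)}(A_{d(h)}))$ for all $g$. *)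

(* Defs.v *)
From Stdlib Require Import List.
Import ListNotations.

Set Implicit Arguments.
Unset Strict Implicit.

Record Rng := {
  rcar :> Type;
  r0 : rcar;
  radd : rcar -> rcar -> rcar;
  ropp : rcar -> rcar;
  rmul : rcar -> rcar -> rcar;
  raddA : forall x y z, radd x (radd y z) = radd (radd x y) z;
  raddC : forall x y, radd x y = radd y x;
  radd0 : forall x, radd r0 x = x;
  raddN : forall x, radd (ropp x) x = r0;
  rmulA : forall x y z, rmul x (rmul y z) = rmul (rmul x y) z;
  rmulDl : forall x y z, rmul (radd x y) z = radd (rmul x z) (rmul y z);
  rmulDr : forall x y z, rmul x (radd y z) = radd (rmul x y) (rmul x z)
}.
Arguments r0 {r}.
Arguments radd {r}.
Arguments ropp {r}.
Arguments rmul {r}.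

Definition fsum {R : Rng} (l : list R) : R := fold_right radd r0 l.

Definition span {R : Rng} (S : R -> Prop) (x : R) : Prop :=
  exists l : list R, Forall S l /\ x = fsum l.

Definition image {R R' : Rng} (f : R -> R') (S : R -> Prop) (y : R') : Prop :=
  exists x, S x /\ y = f x.

Definition is_ideal_in {R : Rng} (S I : R -> Prop) : Prop :=
  (forall x, I x -> S x) /\ I r0 /\
  (forall x y, I x -> I y -> I (radd x y)) /\
  (forall x, I x -> I (ropp x)) /\
  (forall x y, S x -> I y -> I (rmul x y) /\ I (rmul y x)).

Definition is_ideal {R : Rng} (I : R -> Prop) : Prop :=
  is_ideal_in (fun _ => True) I.

Definition ring_mono_on {R R' : Rng} (f : R -> R') (D : R -> Prop) (C : R' -> Prop) : Prop :=
  (forall x, D x -> C (f x)) /\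
  (forall x y, D x -> D y -> f (radd x y) = radd (f x) (f y)) /\
  (forall x y, D x -> D y -> f (rmul x y) = rmul (f x) (f y)) /\
  (forall x y, D x -> D y -> f x = f y -> x = y).

Definition ring_iso_on {R R' : Rng} (f : R -> R') (D : R -> Prop) (C : R' -> Prop) : Prop :=
  ring_mono_on f D C /\ (forall y, C y -> exists x, D x /\ f x = y).

Definition central {R : Rng} (u : R) : Prop := forall a : R, rmul a u = rmul u a.

(** * Groupoids: small categories in which every morphism is invertible.
    [comp g h] is the product [gh] ("g after h"), meaningful when
    [src g = tgt h]; identities are the arrows [idm x]. *)
Record groupoid := {
  Ob : Type;
  Arr : Type;
  src : Arr -> Ob;
  tgt : Arr -> Ob;
  idm : Ob -> Arr;
  comp : Arr -> Arr -> Arr;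
  ginv : Arr -> Arr;
  src_idm : forall x, src (idm x) = x;
  tgt_idm : forall x, tgt (idm x) = x;
  src_comp : forall g h, src g = tgt h -> src (comp g h) = src h;
  tgt_comp : forall g h, src g = tgt h -> tgt (comp g h) = tgt g;
  comp_idr : forall g, comp g (idm (src g)) = g;
  comp_idl : forall g, comp (idm (tgt g)) g = g;
  compA : forall f g h, src f = tgt g -> src g = tgt h ->
            comp f (comp g h) = comp (comp f g) h;
  src_inv : forall g, src (ginv g) = tgt g;
  tgt_inv : forall g, tgt (ginv g) = src g;
  comp_inv_r : forall g, comp g (ginv g) = idm (tgt g);
  comp_inv_l : forall g, comp (ginv g) g = idm (src g)
}.

Section GroupoidNotions.
Variable G : groupoid.

Definition G0 (e : Arr G) : Prop := exists x, e = idm x.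
(** d(g) = g^{-1} g,  r(g) = g g^{-1} *)
Definition dd (g : Arr G) : Arr G := idm (src g).
Definition rr (g : Arr G) : Arr G := idm (tgt g).
Definition composable (g h : Arr G) : Prop := src g = tgt h.

Definition ordered_groupoid (le : Arr G -> Arr G -> Prop) : Prop :=
  (forall g, le g g) /\
  (forall g h, le g h -> le h g -> g = h) /\
  (forall g h k, le g h -> le h k -> le g k) /\
  (forall g h, le g h -> le (ginv g) (ginv h)) /\
  (forall g h k l, le g h -> le k l -> composable g k -> composable h l ->
       le (comp g k) (comp h l)) /\
  (forall g e, G0 e -> le e (dd g) -> exists! h, le h g /\ dd h = e) /\
  (forall g e, G0 e -> le e (rr g) -> exists! h, le h g /\ rr h = e).

Definition partial_action (A : Rng) (Aset : Arr G -> A -> Prop)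
    (al : Arr G -> A -> A) : Prop :=
  (forall g, is_ideal (Aset (rr g))) /\
  (forall g, is_ideal_in (Aset (rr g)) (Aset g)) /\
  (forall g, ring_iso_on (al g) (Aset (ginv g)) (Aset g)) /\
  (forall e, G0 e -> forall a, Aset e a -> al e a = a) /\
  (forall a : A, span (fun x => exists e, G0 e /\ Aset e x) a) /\
  (forall g h, composable g h -> forall a,
      Aset (ginv h) a -> Aset (ginv g) (al h a) -> Aset h (al h a) ->
      Aset (ginv (comp g h)) a) /\
  (forall g h, composable g h -> forall a,
      Aset (ginv h) a -> Aset (ginv g) (al h a) -> Aset h (al h a) ->
      al g (al h a) = al (comp g h) a).

Definition po_condition (le : Arr G -> Arr G -> Prop) (A : Rng)
    (Aset : Arr G -> A -> Prop) (al : Arr G -> A -> A) : Prop :=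
  forall g h, le g h ->
    (forall x, Aset g x -> Aset h x) /\
    (forall x, Aset (ginv g) x -> al g x = al h x).

Definition po_action (le : Arr G -> Arr G -> Prop) (A : Rng)
    (Aset : Arr G -> A -> Prop) (al : Arr G -> A -> A) : Prop :=
  partial_action Aset al /\ po_condition le Aset al.

Definition unital_action (A : Rng) (Aset : Arr G -> A -> Prop) : Prop :=
  forall g, exists u : A, central u /\ rmul u u = u /\
    (forall x, Aset g x <-> exists a : A, x = rmul a u).

Definition preunital (A : Rng) (Aset : Arr G -> A -> Prop) : Prop :=
  forall e, G0 e -> exists u : A, Aset e u /\
    (forall x, Aset e x -> rmul u x = x /\ rmul x u = x) /\
    central u /\ rmul u u = u.

Definition ordered_global_action (le : Arr G -> Arr G -> Prop) (B : Rng)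
    (Bset : Arr G -> B -> Prop) (be : Arr G -> B -> B) : Prop :=
  partial_action Bset be /\
  (forall g x, Bset g x <-> Bset (rr g) x) /\
  po_condition le Bset be.

Definition has_globalization (le : Arr G -> Arr G -> Prop) (A : Rng)
    (Aset : Arr G -> A -> Prop) (al : Arr G -> A -> A) : Prop :=
  exists (B : Rng) (Bset : Arr G -> B -> Prop) (be : Arr G -> B -> B)
         (phi : Arr G -> A -> B),
    ordered_global_action le Bset be /\
    (forall e, G0 e -> ring_mono_on (phi e) (Aset e) (Bset e)) /\
    (forall e, G0 e -> is_ideal_in (Bset e) (image (phi e) (Aset e))) /\
    (forall g y, image (phi (rr g)) (Aset g) y <->
        (image (phi (rr g)) (Aset (rr g)) y /\
         image (be g) (image (phi (dd g)) (Aset (dd g))) y)) /\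
    (forall g a, Aset (ginv g) a -> be g (phi (dd g) a) = phi (rr g) (al g a)) /\
    (forall g y, Bset g y <->
        span (fun z => exists h a, le (rr h) (rr g) /\ Aset (dd h) a /\
                                   z = be h (phi (dd h) a)) y).

End GroupoidNotions.

(* Main.v *)
Require Import Defs.
From Stdlib Require Import List Classical ClassicalEpsilon FunctionalExtensionality ProofIrrelevance.
Import ListNotations.


Section RngLemmas.
Context {R : Rng}.
Implicit Types x y z : R.

Lemma radd0r x : radd x r0 = x.
Proof. rewrite raddC; apply radd0. Qed.
Lemma raddNr x : radd x (ropp x) = r0.
Proof. rewrite raddC; apply raddN. Qed.
Lemma radd_cancel_l x y z : radd x y = radd x z -> y = z.
Proof.
  intro H. rewrite <- (radd0 y), <- (radd0 z), <- (raddN x), <- !raddA, H. reflexivity.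
Qed.
Lemma radd_cancel_r x y z : radd y x = radd z x -> y = z.
Proof. rewrite (raddC y), (raddC z). apply radd_cancel_l. Qed.
Lemma radd_idem0 x : radd x x = x -> x = r0.
Proof. intro H. apply (radd_cancel_l x). rewrite H, radd0r. reflexivity. Qed.
Lemma rmul0r x : rmul r0 x = r0.
Proof. apply radd_idem0. rewrite <- rmulDl, radd0. reflexivity. Qed.
Lemma rmulr0 x : rmul x r0 = r0.
Proof. apply radd_idem0. rewrite <- rmulDr, radd0. reflexivity. Qed.
Lemma ropp_uniq x y : radd y x = r0 -> y = ropp x.
Proof. intro H. apply (radd_cancel_r x). rewrite H, raddN. reflexivity. Qed.
Lemma ropp_mull x y : rmul (ropp x) y = ropp (rmul x y).
Proof. apply ropp_uniq. rewrite <- rmulDl, raddN, rmul0r. reflexivity. Qed.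
Lemma ropp_mulr x y : rmul x (ropp y) = ropp (rmul x y).
Proof. apply ropp_uniq. rewrite <- rmulDr, raddN, rmulr0. reflexivity. Qed.
Lemma ropp0 : ropp (r0 : R) = r0.
Proof. symmetry. apply ropp_uniq. apply radd0. Qed.
Lemma ropp_add x y : ropp (radd x y) = radd (ropp x) (ropp y).
Proof.
  symmetry; apply ropp_uniq.
  rewrite (raddC x y), raddA, <- (raddA (ropp x)), raddN, radd0r, raddN. reflexivity.
Qed.
Lemma ropp_opp x : ropp (ropp x) = x.
Proof. symmetry. apply ropp_uniq. apply raddNr. Qed.

Lemma span_ind (P Q : R -> Prop) :
  Q r0 -> (forall x y, Q x -> Q y -> Q (radd x y)) -> (forall x, P x -> Q x) ->
  forall f, span P f -> Q f.
Proof.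
  intros H0 Hadd HP f [l [Hl ->]]. induction Hl; simpl; auto.
Qed.
Lemma span_0 (P : R -> Prop) : span P r0.
Proof. exists []. split; auto. Qed.
Lemma span_add (P : R -> Prop) x y : span P x -> span P y -> span P (radd x y).
Proof.
  intros [l1 [H1 ->]] [l2 [H2 ->]]. exists (l1 ++ l2). split.
  - apply Forall_app; auto.
  - induction l1; simpl. rewrite radd0; auto. rewrite <- raddA, IHl1; auto. inversion H1; auto.
Qed.
Lemma span_in (P : R -> Prop) x : P x -> span P x.
Proof. intro H. exists [x]. split. constructor; auto. simpl. rewrite radd0r; auto. Qed.
Lemma span_mono (P Q : R -> Prop) : (forall x, P x -> Q x) -> forall f, span P f -> span Q f.
Proof.
  intros H. apply span_ind. apply span_0. apply span_add. intros; apply span_in; auto.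
Qed.
Lemma span_span (P : R -> Prop) f : span (span P) f -> span P f.
Proof. apply span_ind; auto using span_0, span_add. Qed.
Lemma span_opp (P : R -> Prop) : (forall x, P x -> span P (ropp x)) -> forall f, span P f -> span P (ropp f).
Proof.
  intros H. apply span_ind with (Q := fun f => span P (ropp f)).
  rewrite ropp0; apply span_0.
  intros x y Hx Hy; rewrite ropp_add; apply span_add; auto. auto.
Qed.
Lemma span_mul (P P' Q : R -> Prop) :
  (forall x y, P x -> P' y -> span Q (rmul x y)) ->
  forall f f', span P f -> span P' f' -> span Q (rmul f f').
Proof.
  intros H f f' Hf Hf'. revert f Hf.
  apply span_ind with (Q := fun f => span Q (rmul f f')).
  rewrite rmul0r; apply span_0.
  intros x y Hx Hy; rewrite rmulDl; apply span_add; auto.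
  intros x Hx. revert f' Hf'.
  apply span_ind with (Q := fun f' => span Q (rmul x f')).
  rewrite rmulr0; apply span_0.
  intros y z Hy Hz; rewrite rmulDr; apply span_add; auto.
  auto.
Qed.
End RngLemmas.

Lemma hom0 {R R' : Rng} (f : R -> R') (D : R -> Prop) :
  D r0 -> (forall x y : R, D x -> D y -> f (radd x y) = radd (f x) (f y)) -> f r0 = r0.
Proof. intros H0 Hadd. apply radd_idem0. rewrite <- Hadd by auto. rewrite radd0. reflexivity. Qed.
Lemma homN {R R' : Rng} (f : R -> R') (D : R -> Prop) (x : R) :
  D r0 -> D x -> D (ropp x) ->
  (forall x y : R, D x -> D y -> f (radd x y) = radd (f x) (f y)) -> f (ropp x) = ropp (f x).
Proof.
  intros H0 Hx Hnx Hadd. apply ropp_uniq. rewrite <- Hadd by auto. rewrite raddN.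
  eapply hom0; eauto.
Qed.

Ltac st := repeat first [ rewrite src_inv | rewrite tgt_inv | rewrite src_idm | rewrite tgt_idm
  | rewrite src_comp by (st; congruence) | rewrite tgt_comp by (st; congruence) ]; try congruence.

Section GLemmas.
Context {G : groupoid}.
Implicit Types g h k : Arr G.

Lemma ginv_ginv g : ginv (ginv g) = g.
Proof.
  rewrite <- (comp_idr (ginv (ginv g))). st.
  rewrite <- (comp_inv_l g).
  rewrite compA by st.
  rewrite comp_inv_l. st. apply comp_idl.
Qed.

Lemma ginv_idm (x : Ob G) : ginv (idm x) = idm x.
Proof.
  rewrite <- (comp_idr (ginv (idm x))). st.
  assert (H := comp_inv_l (idm x)); rewrite src_idm in H; exact H.
Qed.

Lemma ginv_comp g h : src g = tgt h -> ginv (comp g h) = comp (ginv h) (ginv g).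
Proof.
  intro Hgh.
  set (x := comp (ginv h) (ginv g)).
  assert (Hx : comp x (comp g h) = idm (src h)).
  { unfold x. rewrite <- compA by st. rewrite (compA (f:=ginv g)) by st.
    rewrite comp_inv_l. rewrite Hgh. rewrite comp_idl. apply comp_inv_l. }
  rewrite <- (comp_idl (ginv (comp g h))).
  rewrite tgt_inv. rewrite src_comp by auto. rewrite <- Hx.
  rewrite <- compA by (unfold x; st).
  rewrite comp_inv_r. rewrite tgt_comp by auto.
  unfold x. replace (tgt g) with (src (comp (ginv h) (ginv g))) by st.
  apply comp_idr.
Qed.

Lemma comp_inv_l_assoc g k : tgt g = tgt k -> comp g (comp (ginv g) k) = k.
Proof.
  intro H. rewrite compA by st. rewrite comp_inv_r. rewrite H. apply comp_idl.
Qed.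
Lemma comp_inv_r_assoc g k : src g = tgt k -> comp (ginv g) (comp g k) = k.
Proof.
  intro H. pose proof (comp_inv_l_assoc (ginv g) k) as H1. rewrite ginv_ginv in H1. apply H1. st.
Qed.

Lemma idm_inj (x y : Ob G) : idm x = idm y -> x = y.
Proof. intro H. rewrite <- (src_idm x), <- (src_idm y), H. reflexivity. Qed.

Lemma rr_eq g h : rr g = rr h <-> tgt g = tgt h.
Proof. unfold rr. split; intro H. apply idm_inj; auto. rewrite H; auto. Qed.
Lemma dd_eq g h : dd g = dd h <-> src g = src h.
Proof. unfold dd. split; intro H. apply idm_inj; auto. rewrite H; auto. Qed.

Lemma rr_inv g : rr (ginv g) = dd g.
Proof. unfold rr, dd. st. Qed.
Lemma dd_inv g : dd (ginv g) = rr g.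
Proof. unfold rr, dd. st. Qed.
Lemma rr_idm (x : Ob G) : rr (idm x) = idm x.
Proof. unfold rr. st. Qed.
Lemma dd_idm (x : Ob G) : dd (idm x) = idm x.
Proof. unfold dd. st. Qed.
Lemma rr_rr g : rr (rr g) = rr g.
Proof. unfold rr. st. Qed.
Lemma dd_dd g : dd (dd g) = dd g.
Proof. unfold dd. st. Qed.
Lemma rr_dd g : rr (dd g) = dd g.
Proof. unfold rr, dd. st. Qed.
Lemma dd_rr g : dd (rr g) = rr g.
Proof. unfold rr, dd. st. Qed.
Lemma rr_comp g h : src g = tgt h -> rr (comp g h) = rr g.
Proof. intro; unfold rr; st. Qed.
Lemma dd_comp g h : src g = tgt h -> dd (comp g h) = dd h.
Proof. intro; unfold dd; st. Qed.
Lemma G0_rr g : G0 (rr g).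
Proof. exists (tgt g); reflexivity. Qed.
Lemma G0_dd g : G0 (dd g).
Proof. exists (src g); reflexivity. Qed.
Lemma G0_rr_id (e : Arr G) : G0 e -> rr e = e.
Proof. intros [x ->]. apply rr_idm. Qed.
Lemma G0_dd_id (e : Arr G) : G0 e -> dd e = e.
Proof. intros [x ->]. apply dd_idm. Qed.
Lemma G0_inv (e : Arr G) : G0 e -> ginv e = e.
Proof. intros [x ->]. apply ginv_idm. Qed.
Lemma comp_rr_l g : comp (rr (G:=G) g) g = g.
Proof. apply comp_idl. Qed.
Lemma comp_dd_r g : comp g (dd (G:=G) g) = g.
Proof. apply comp_idr. Qed.
End GLemmas.
Section Ord.
Context {G : groupoid} (le : Arr G -> Arr G -> Prop).
Hypothesis Hog : ordered_groupoid le.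

Lemma le_refl g : le g g.
Proof. apply Hog. Qed.
Lemma le_trans g h k : le g h -> le h k -> le g k.
Proof. destruct Hog as (_&_&H&_). apply H. Qed.
Lemma le_inv g h : le g h -> le (ginv g) (ginv h).
Proof. destruct Hog as (_&_&_&H&_). apply H. Qed.
Lemma le_comp g h k l : le g h -> le k l -> src g = tgt k -> src h = tgt l ->
  le (comp g k) (comp h l).
Proof. destruct Hog as (_&_&_&_&H&_). apply H. Qed.
Lemma le_rr g h : le g h -> le (rr g) (rr h).
Proof.
  intro H. unfold rr. rewrite <- !comp_inv_r. apply le_comp; auto using le_inv; st.
Qed.
Lemma le_dd g h : le g h -> le (dd g) (dd h).
Proof.
  intro H. unfold dd. rewrite <- !comp_inv_l. apply le_comp; auto using le_inv; st.
Qed.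
Lemma uniqR g1 g2 g : le g1 g -> le g2 g -> rr g1 = rr g2 -> g1 = g2.
Proof.
  destruct Hog as (_&_&_&_&_&_&H). intros H1 H2 H3.
  destruct (H g (rr g1) (G0_rr g1) (le_rr _ _ H1)) as [k [_ Hk]].
  transitivity k. symmetry; apply Hk; auto. apply Hk; auto.
Qed.
Lemma uniqD g1 g2 g : le g1 g -> le g2 g -> dd g1 = dd g2 -> g1 = g2.
Proof.
  destruct Hog as (_&_&_&_&_&H&_). intros H1 H2 H3.
  destruct (H g (dd g1) (G0_dd g1) (le_dd _ _ H1)) as [k [_ Hk]].
  transitivity k. symmetry; apply Hk; auto. apply Hk; auto.
Qed.
Lemma existsD g x : G0 x -> le x (dd g) -> exists g', le g' g /\ dd g' = x.
Proof.
  destruct Hog as (_&_&_&_&_&H&_). intros H1 H2.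
  destruct (H g x H1 H2) as [k [Hk _]]. exists k; auto.
Qed.
Lemma le_G0 g e : G0 e -> le g e -> g = dd g.
Proof.
  intros He H. apply (uniqD g (dd g) e); auto.
  apply le_trans with (dd e). apply le_dd; auto. rewrite G0_dd_id; auto. apply le_refl.
  rewrite dd_dd; auto.
Qed.
End Ord.
Section PA.
Context {G : groupoid} {A : Rng} (Aset : Arr G -> A -> Prop) (al : Arr G -> A -> A).
Hypothesis Hpa : partial_action Aset al.
Variable one : Arr G -> A.
Hypothesis Hc : forall g, central (one g).
Hypothesis Hi : forall g, rmul (one g) (one g) = one g.
Hypothesis Hs : forall g x, Aset g x <-> exists a, x = rmul a (one g).

Lemma in_iff g x : Aset g x <-> rmul x (one g) = x.
Proof.
  rewrite Hs. split.
  - intros [a ->]. rewrite <- rmulA, Hi. reflexivity.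
  - intro H. exists x. auto.
Qed.
Lemma in_one g : Aset g (one g).
Proof. apply in_iff. apply Hi. Qed.
Lemma in_mul_l g a x : Aset g x -> Aset g (rmul a x).
Proof. rewrite !in_iff. intro H. rewrite <- rmulA, H. reflexivity. Qed.
Lemma in_mul_r g a x : Aset g x -> Aset g (rmul x a).
Proof.
  rewrite !in_iff. intro H. rewrite <- rmulA, Hc, rmulA, H. reflexivity.
Qed.
Lemma in_add g x y : Aset g x -> Aset g y -> Aset g (radd x y).
Proof. rewrite !in_iff. intros H1 H2. rewrite rmulDl, H1, H2. reflexivity. Qed.
Lemma in_0 g : Aset g r0.
Proof. apply in_iff. apply rmul0r. Qed.
Lemma in_opp g x : Aset g x -> Aset g (ropp x).
Proof. rewrite !in_iff. intros H. rewrite ropp_mull, H. reflexivity. Qed.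
Lemma in_m1 g a : Aset g (rmul a (one g)).
Proof. apply in_mul_l, in_one. Qed.

Lemma one_c g a : rmul a (one g) = rmul (one g) a.
Proof. apply Hc. Qed.
Lemma one_central2 g h : central (rmul (one g) (one h)).
Proof.
  intro a. rewrite rmulA, (one_c g a), <- rmulA, (one_c h a), rmulA. reflexivity.
Qed.

Lemma rr_sub g x : Aset g x -> Aset (rr g) x.
Proof. destruct Hpa as (_&H2&_). apply (H2 g). Qed.
Lemma inv_sub g x : Aset (ginv g) x -> Aset (dd g) x.
Proof. intro H. rewrite <- rr_inv. apply rr_sub; auto. Qed.

Lemma al_iso g : ring_iso_on (al g) (Aset (ginv g)) (Aset g).
Proof. destruct Hpa as (_&_&H3&_). apply H3. Qed.
Lemma al_in g x : Aset (ginv g) x -> Aset g (al g x).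
Proof. apply (al_iso g). Qed.
Lemma al_add g x y : Aset (ginv g) x -> Aset (ginv g) y -> al g (radd x y) = radd (al g x) (al g y).
Proof. apply (al_iso g). Qed.
Lemma al_mul g x y : Aset (ginv g) x -> Aset (ginv g) y -> al g (rmul x y) = rmul (al g x) (al g y).
Proof. apply (al_iso g). Qed.
Lemma al_0 g : al g r0 = r0.
Proof. eapply hom0 with (D := Aset (ginv g)). apply in_0. apply al_add. Qed.
Lemma al_opp g x : Aset (ginv g) x -> al g (ropp x) = ropp (al g x).
Proof. intro. eapply homN with (D := Aset (ginv g)); auto using in_0, in_opp. apply al_add. Qed.
Lemma al_id e x : G0 e -> Aset e x -> al e x = x.
Proof. destruct Hpa as (_&_&_&H4&_). intros; apply H4; auto. Qed.
Lemma pa_P2 g h x : src g = tgt h -> Aset (ginv h) x -> Aset (ginv g) (al h x) ->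
  Aset (ginv (comp g h)) x.
Proof.
  destruct Hpa as (_&_&_&_&_&H6&_). intros. eapply H6; eauto. apply al_in; auto.
Qed.
Lemma pa_P3 g h x : src g = tgt h -> Aset (ginv h) x -> Aset (ginv g) (al h x) ->
  al g (al h x) = al (comp g h) x.
Proof.
  destruct Hpa as (_&_&_&_&_&_&H7). intros. eapply H7; eauto. apply al_in; auto.
Qed.
Lemma al_inv g x : Aset (ginv g) x -> al (ginv g) (al g x) = x.
Proof.
  intro H. rewrite pa_P3; auto.
  - rewrite comp_inv_l. apply al_id. apply G0_dd. apply inv_sub; auto.
  - st.
  - rewrite ginv_ginv. apply al_in; auto.
Qed.
Lemma al_inv' g y : Aset g y -> al g (al (ginv g) y) = y.
Proof.
  intro H. pose proof (al_inv (ginv g) y) as H1. rewrite ginv_ginv in H1. apply H1; auto.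
Qed.

Lemma al_cap g h x : src g = tgt h -> Aset (ginv h) x -> Aset (ginv (comp g h)) x ->
  Aset (ginv g) (al h x).
Proof.
  intros Hgh H1 H2.
  assert (Hc1 : src (comp g h) = tgt (ginv h)) by st.
  pose proof (pa_P2 (comp g h) (ginv h) (al h x) Hc1) as H.
  rewrite ginv_ginv in H. rewrite al_inv in H; auto.
  rewrite <- compA in H by st. rewrite comp_inv_r in H. rewrite <- Hgh in H.
  rewrite comp_idr in H. apply H; auto. apply al_in; auto.
Qed.

Lemma al_ones g h : src g = tgt h ->
  al h (rmul (one (ginv h)) (one (ginv (comp g h)))) = rmul (one h) (one (ginv g)).
Proof.
  intro Hgh.
  set (e := rmul (one (ginv h)) (one (ginv (comp g h)))).
  set (u := rmul (one h) (one (ginv g))).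
  assert (He1 : Aset (ginv h) e) by (apply in_mul_r, in_one).
  assert (He2 : Aset (ginv (comp g h)) e) by (apply in_mul_l, in_one).
  set (v := al h e).
  assert (Hv1 : Aset (ginv g) v) by (apply al_cap; auto).
  assert (Hv2 : Aset h v) by (apply al_in; auto).
  assert (Hu : Aset h u) by (apply in_mul_r, in_one).
  set (t := al (ginv h) u).
  assert (Ht1 : Aset (ginv h) t) by (apply al_in; rewrite ginv_ginv; auto).
  assert (Ht2 : al h t = u) by (apply al_inv'; auto).
  assert (Ht3 : Aset (ginv (comp g h)) t).
  { apply pa_P2; auto. rewrite Ht2. apply in_m1. }
  assert (Hte : rmul t e = t).
  { unfold e. rewrite rmulA. rewrite (proj1 (in_iff _ _) Ht1). apply in_iff; auto. }
  assert (Huv : u = rmul u v).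
  { rewrite <- Ht2 at 1. rewrite <- Hte. rewrite al_mul; auto. rewrite Ht2. reflexivity. }
  assert (Hvu : rmul v u = v).
  { unfold u. rewrite rmulA. rewrite (proj1 (in_iff _ _) Hv2). apply in_iff; auto. }
  fold v. fold u. rewrite <- Hvu. unfold u. rewrite (one_central2 h (ginv g) v). fold u. symmetry; exact Huv.
Qed.

Lemma idem_absorb g x : rmul (rmul x (one g)) (one g) = rmul x (one g).
Proof. rewrite <- rmulA, Hi. reflexivity. Qed.

Lemma al_L g h x : src g = tgt h ->
  al g (rmul (al h (rmul x (one (ginv h)))) (one (ginv g))) =
  rmul (al (comp g h) (rmul x (one (ginv (comp g h))))) (one g).
Proof.
  intro Hgh.
  set (w := rmul x (one (ginv h))).
  assert (Hw : Aset (ginv h) w) by apply in_m1.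
  set (z := rmul w (one (ginv (comp g h)))).
  assert (Hz1 : Aset (ginv h) z) by (apply in_mul_r; auto).
  assert (Hz2 : al h z = rmul (al h w) (one (ginv g))).
  { assert (z = rmul w (rmul (one (ginv h)) (one (ginv (comp g h))))).
    { unfold z. rewrite rmulA. f_equal. symmetry. apply in_iff; auto. }
    rewrite H. rewrite al_mul; auto. rewrite al_ones; auto. rewrite rmulA.
    f_equal. apply in_iff. apply al_in; auto. apply in_mul_r, in_one. }
  rewrite <- Hz2. rewrite pa_P3; auto.
  2: { rewrite Hz2. apply in_m1. }
  assert (Hc2 : src (ginv g) = tgt (comp g h)) by st.
  pose proof (al_ones (ginv g) (comp g h) Hc2) as Ho.
  rewrite ginv_ginv in Ho.
  assert (Hgg : comp (ginv g) (comp g h) = h).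
  { apply comp_inv_r_assoc; auto. }
  rewrite Hgg in Ho.
  assert (Hz3 : z = rmul (rmul x (one (ginv (comp g h)))) (rmul (one (ginv (comp g h))) (one (ginv h)))).
  { unfold z, w. rewrite <- !rmulA. f_equal. rewrite rmulA, Hi. apply one_c. }
  rewrite Hz3. rewrite al_mul; try (apply in_m1 || apply in_mul_r, in_one).
  rewrite Ho. rewrite rmulA. f_equal.
  apply in_iff. apply al_in. apply in_m1.
Qed.
Variable le : Arr G -> Arr G -> Prop.
Hypothesis Hog : ordered_groupoid le.

Definition Fr : Rng.
Proof.
  refine {| rcar := Arr G -> A; r0 := fun _ => @r0 A; radd := fun f g k => radd (f k) (g k);
    ropp := fun f k => ropp (f k); rmul := fun f g k => rmul (f k) (g k) |};
  intros; apply functional_extensionality; intros.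
  apply raddA. apply raddC. apply radd0. apply raddN. apply rmulA. apply rmulDl. apply rmulDr.
Defined.

Definition psi (a : A) (m : Arr G) : A := al (ginv m) (rmul a (one m)).
Definition sh (u : Arr G) (f : Fr) : Fr := fun k =>
  if excluded_middle_informative (rr k = rr u) then f (comp (ginv u) k) else r0.
Definition E (h : Arr G) (a : A) : Fr := sh h (psi a).
Definition bet (g : Arr G) (f : Fr) : Fr := fun k =>
  match excluded_middle_informative (exists g', le g' g /\ rr g' = rr k) with
  | left H => f (comp (ginv (proj1_sig (constructive_indefinite_description _ H))) k)
  | right _ => r0
  end.

Lemma F_ext (f f' : Fr) : (forall k, f k = f' k) -> f = f'.
Proof. intro; apply functional_extensionality; auto. Qed.

Lemma sh_comp u v f : src u = tgt v -> sh u (sh v f) = sh (comp u v) f.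
Proof.
  intro Huv. apply F_ext; intro k. unfold sh.
  destruct (excluded_middle_informative (rr k = rr u)) as [H1|H1];
  destruct (excluded_middle_informative (rr k = rr (comp u v))) as [H3|H3].
  - destruct (excluded_middle_informative (rr (comp (ginv u) k) = rr v)) as [H2|H2].
    + rewrite ginv_comp by auto. rewrite compA; auto. st. apply rr_eq in H1; st.
    + exfalso; apply H2. apply rr_eq in H1. apply rr_eq. st.
  - exfalso; apply H3. rewrite rr_comp; auto.
  - exfalso; apply H1. rewrite rr_comp in H3; auto.
  - reflexivity.
Qed.

Lemma bet_at g g' f k : le g' g -> rr g' = rr k -> bet g f k = f (comp (ginv g') k).
Proof.
  intros H1 H2. unfold bet.
  destruct (excluded_middle_informative _) as [H|H].
  - destruct (constructive_indefinite_description _ H) as [g1 [Hg1 Hg1']]. simpl.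
    rewrite (uniqR le Hog g1 g' g); auto. congruence.
  - exfalso; apply H; eauto.
Qed.
Lemma bet_off g f k : (forall g', le g' g -> rr g' <> rr k) -> bet g f k = r0.
Proof.
  intros H1. unfold bet.
  destruct (excluded_middle_informative _) as [H|H]; auto.
  destruct H as [g1 [Hg1 Hg1']]. exfalso; eapply H1; eauto.
Qed.

Lemma bet_sh g g' h f : le g' g -> dd g' = rr h -> bet g (sh h f) = sh (comp g' h) f.
Proof.
  intros H1 H2. assert (Hcg : src g' = tgt h) by (unfold dd, rr in H2; apply idm_inj in H2; auto).
  apply F_ext; intro k.
  destruct (classic (exists g1, le g1 g /\ rr g1 = rr k)) as [[g1 [Hg1 Hg1']]|N].
  - rewrite (bet_at g g1 (sh h f) k); auto. unfold sh.
    destruct (excluded_middle_informative (rr (comp (ginv g1) k) = rr h)) as [E1|E1];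
    destruct (excluded_middle_informative (rr k = rr (comp g' h))) as [E2|E2].
    + assert (g1 = g').
      { apply (uniqD le Hog g1 g' g); auto. rewrite H2, <- E1. unfold dd, rr.
        apply rr_eq in Hg1'. st. }
      subst g1. rewrite ginv_comp by auto. rewrite compA; auto. st. apply rr_eq in Hg1'; st.
    + exfalso. apply E2. rewrite rr_comp by auto. 
      assert (g1 = g').
      { apply (uniqD le Hog g1 g' g); auto. rewrite H2, <- E1. unfold dd, rr.
        apply rr_eq in Hg1'. st. }
      subst; auto.
    + exfalso. apply E1. rewrite rr_comp in E2 by auto.
      assert (g1 = g') by (apply (uniqR le Hog g1 g' g); auto; congruence).
      subst g1. rewrite <- H2. unfold rr, dd. apply rr_eq in Hg1'. st.
    + reflexivity.
  - rewrite bet_off. unfold sh.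
    destruct (excluded_middle_informative (rr k = rr (comp g' h))) as [E2|E2]; auto.
    exfalso; apply N. exists g'. split; auto. rewrite rr_comp in E2; auto.
    intros g1 Hg1 Hk. apply N; eauto.
Qed.
Lemma sh_add u f f' : sh u (rmul (r:=Fr) f f') = rmul (r:=Fr) (sh u f) (sh u f') /\
  sh u (radd (r:=Fr) f f') = radd (r:=Fr) (sh u f) (sh u f') /\
  sh u (ropp (r:=Fr) f) = ropp (r:=Fr) (sh u f) /\ sh u (r0 (r:=Fr)) = r0.
Proof.
  repeat split; apply F_ext; intro k; unfold sh; simpl;
  destruct (excluded_middle_informative _); auto.
  rewrite rmul0r; auto. rewrite radd0; auto. rewrite ropp0; auto.
Qed.
Lemma bet_add g f f' : bet g (rmul (r:=Fr) f f') = rmul (r:=Fr) (bet g f) (bet g f') /\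
  bet g (radd (r:=Fr) f f') = radd (r:=Fr) (bet g f) (bet g f') /\
  bet g (ropp (r:=Fr) f) = ropp (r:=Fr) (bet g f) /\ bet g (r0 (r:=Fr)) = r0.
Proof.
  repeat split; apply F_ext; intro k; unfold bet; simpl;
  destruct (excluded_middle_informative _); auto.
  rewrite rmul0r; auto. rewrite radd0; auto. rewrite ropp0; auto.
Qed.

Lemma in_m1' m a : Aset (ginv (ginv m)) (rmul a (one m)).
Proof. rewrite ginv_ginv. apply in_m1. Qed.

Lemma psi_add a b m : psi (radd a b) m = radd (psi a m) (psi b m).
Proof. unfold psi. rewrite rmulDl. apply al_add; apply in_m1'. Qed.
Lemma psi_opp a m : psi (ropp a) m = ropp (psi a m).
Proof. unfold psi. rewrite ropp_mull. apply al_opp; apply in_m1'. Qed.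
Lemma psi_0 m : psi r0 m = r0.
Proof. unfold psi. rewrite rmul0r. apply al_0. Qed.
Lemma psi_mul a b m : psi (rmul a b) m = rmul (psi a m) (psi b m).
Proof.
  unfold psi. rewrite <- al_mul by apply in_m1'. f_equal.
  rewrite <- !rmulA. f_equal. rewrite rmulA, <- (one_c m b), <- rmulA, Hi. reflexivity.
Qed.
Lemma psi_in a m : Aset (ginv m) (psi a m).
Proof. unfold psi. apply al_in. apply in_m1'. Qed.
Lemma psi_id e a : G0 e -> Aset e a -> psi a e = a.
Proof.
  intros He Ha. unfold psi. rewrite G0_inv by auto. rewrite (proj1 (in_iff _ _) Ha).
  apply al_id; auto.
Qed.

Lemma psi_Q u m a : tgt u = tgt m ->
  psi (al u (rmul a (one (ginv u)))) m = rmul (psi a (comp (ginv u) m)) (one (ginv m)).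
Proof.
  intro H. unfold psi.
  assert (Hc1 : src (ginv m) = tgt u) by st.
  pose proof (al_L (ginv m) u a Hc1) as HL. rewrite ginv_ginv in HL. rewrite HL.
  f_equal. rewrite ginv_comp by st. rewrite ginv_ginv. f_equal. f_equal. f_equal.
  rewrite ginv_comp by st. rewrite ginv_ginv. reflexivity.
Qed.
Lemma psi_Q_in u m a : tgt u = tgt m -> Aset (ginv u) a ->
  Aset (ginv m) (psi a (comp (ginv u) m)).
Proof.
  intros H Ha. unfold psi.
  assert (Hinv : ginv (comp (ginv u) m) = comp (ginv m) u).
  { rewrite ginv_comp by st. rewrite ginv_ginv. reflexivity. }
  rewrite Hinv. apply al_cap. st.
  - rewrite <- Hinv, ginv_ginv. apply in_m1.
  - rewrite comp_inv_l_assoc by auto. apply in_mul_r. auto.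
Qed.
Lemma psi_Q2 u m a : tgt u = tgt m -> Aset (ginv u) a ->
  psi (al u a) m = psi a (comp (ginv u) m).
Proof.
  intros H Ha. rewrite <- (proj1 (in_iff _ _) Ha) at 1. rewrite psi_Q by auto.
  apply in_iff. apply psi_Q_in; auto.
Qed.

Lemma E_at h a k : rr k = rr h -> E h a k = psi a (comp (ginv h) k).
Proof. intro H. unfold E, sh. destruct (excluded_middle_informative _); tauto. Qed.
Lemma E_off h a k : rr k <> rr h -> E h a k = r0.
Proof. intro H. unfold E, sh. destruct (excluded_middle_informative _); tauto. Qed.

Lemma E_add h a b : E h (radd a b) = radd (r:=Fr) (E h a) (E h b).
Proof.
  apply F_ext; intro k. simpl. destruct (classic (rr k = rr h)).
  rewrite !E_at by auto. apply psi_add. rewrite !E_off by auto. simpl. rewrite radd0; auto.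
Qed.
Lemma E_opp h a : E h (ropp a) = ropp (r:=Fr) (E h a).
Proof.
  apply F_ext; intro k. simpl. destruct (classic (rr k = rr h)).
  rewrite !E_at by auto. apply psi_opp. rewrite !E_off by auto. simpl. rewrite ropp0; auto.
Qed.
Lemma E_0 h : E h r0 = r0 (r:=Fr).
Proof.
  apply F_ext; intro k. destruct (classic (rr k = rr h)).
  rewrite !E_at by auto. apply psi_0. rewrite !E_off by auto. reflexivity.
Qed.

Definition Xm (h h' : Arr G) (a : A) : A :=
  al (comp (ginv h') h) (rmul a (one (ginv (comp (ginv h') h)))).

Lemma E_mul_pt h h' k a : tgt h = tgt h' -> tgt k = tgt h' ->
  psi (Xm h h' a) (comp (ginv h') k) = rmul (psi a (comp (ginv h) k)) (one (ginv (comp (ginv h') k))).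
Proof.
  intros H1 H2. unfold Xm. rewrite psi_Q by st.
  assert (Heq : comp (ginv (comp (ginv h') h)) (comp (ginv h') k) = comp (ginv h) k).
  { rewrite ginv_comp by st. rewrite ginv_ginv. rewrite <- compA by st.
    rewrite comp_inv_l_assoc by st. reflexivity. }
  rewrite Heq. reflexivity.
Qed.

Lemma E_mul h h' a a' : rr h = rr h' ->
  rmul (r:=Fr) (E h a) (E h' a') = E h' (rmul (Xm h h' a) a') /\
  rmul (r:=Fr) (E h' a') (E h a) = E h' (rmul a' (Xm h h' a)).
Proof.
  intro Hhh. split; apply F_ext; intro k; simpl; destruct (classic (rr k = rr h')) as [Hk|Hk].
  - rewrite !E_at by congruence. rewrite psi_mul. apply rr_eq in Hk. apply rr_eq in Hhh.
    rewrite E_mul_pt by auto.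
    rewrite <- rmulA. f_equal. rewrite <- one_c. symmetry. apply in_iff. apply psi_in.
  - rewrite !E_off by congruence. apply rmul0r.
  - rewrite !E_at by congruence. rewrite psi_mul. apply rr_eq in Hk. apply rr_eq in Hhh.
    rewrite E_mul_pt by auto.
    rewrite one_c. rewrite rmulA. f_equal. symmetry. apply in_iff. apply psi_in.
  - rewrite !E_off by congruence. apply rmul0r.
Qed.
Lemma E_mul0 h h' a a' : rr h <> rr h' -> rmul (r:=Fr) (E h a) (E h' a') = r0.
Proof.
  intro Hhh. apply F_ext; intro k; simpl. destruct (classic (rr k = rr h)).
  rewrite (E_off h') by congruence. apply rmulr0.
  rewrite E_off by auto. apply rmul0r.
Qed.
Lemma Xm_in h h' a : Aset (ginv (comp (ginv h') h)) (rmul a (one (ginv (comp (ginv h') h)))) .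
Proof. apply in_m1. Qed.
Definition genle (e : Arr G) (f : Fr) : Prop :=
  exists h a, le (rr h) e /\ Aset (dd h) a /\ f = E h a.
Definition gen (f : Fr) : Prop := exists h a, Aset (dd h) a /\ f = E h a.
Definition SS (f : Fr) : Prop := span (R:=Fr) gen f.
Definition BF (e : Arr G) (f : Fr) : Prop := span (R:=Fr) (genle e) f.

Lemma genle_gen e f : genle e f -> gen f.
Proof. intros (h&a&_&H1&H2). exists h, a; auto. Qed.
Lemma BF_S e f : BF e f -> SS f.
Proof. apply span_mono, genle_gen. Qed.
Lemma BF_mono e e' f : le e e' -> BF e f -> BF e' f.
Proof.
  intro H. apply span_mono. intros x (h&a&H1&H2&H3). exists h, a; repeat split; auto.
  eapply le_trans; eauto.
Qed.
Lemma gen_G0 f : gen f -> exists e, G0 e /\ BF e f.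
Proof.
  intros (h&a&H1&H2). exists (rr h). split. apply G0_rr. apply span_in. exists h, a.
  repeat split; auto. apply le_refl; auto.
Qed.

Lemma gen_mul e x y : gen x -> genle e y -> BF e (rmul (r:=Fr) x y) /\ BF e (rmul (r:=Fr) y x).
Proof.
  intros (h&a&Ha&->) (h'&a'&Hle&Ha'&->).
  destruct (classic (rr h = rr h')) as [Hr|Hr].
  - destruct (E_mul h h' a a' Hr) as [M1 M2]. rewrite M1, M2. split; apply span_in.
    + exists h', (rmul (Xm h h' a) a'). repeat split; auto. apply in_mul_l; auto.
    + exists h', (rmul a' (Xm h h' a)). repeat split; auto. apply in_mul_r; auto.
  - rewrite E_mul0 by auto. rewrite E_mul0 by auto. split; apply span_0.
Qed.
Lemma S_mul f f' : SS f -> SS f' -> SS (rmul (r:=Fr) f f').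
Proof.
  apply span_mul. intros x y Hx Hy.
  destruct Hy as (h&a&Ha&->). assert (genle (rr h) (E h a)).
  { exists h, a. repeat split; auto. apply le_refl; auto. }
  destruct (gen_mul _ _ _ Hx H) as [H1 _]. apply BF_S in H1. exact H1.
Qed.
Lemma BF_mul_l e f f' : SS f -> BF e f' -> BF e (rmul (r:=Fr) f f').
Proof. apply span_mul. intros x y Hx Hy. apply (gen_mul _ _ _ Hx Hy). Qed.
Lemma BF_mul_r e f f' : BF e f' -> SS f -> BF e (rmul (r:=Fr) f' f).
Proof. intros H1 H2. revert H1 H2. apply span_mul. intros x y Hx Hy. apply (gen_mul _ _ _ Hy Hx). Qed.
Lemma BF_opp e f : BF e f -> BF e (ropp (r:=Fr) f).
Proof.
  apply span_opp. intros x (h&a&H1&H2&->). apply span_in. exists h, (ropp a).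
  repeat split; auto. apply in_opp; auto. symmetry; apply E_opp.
Qed.
Lemma S_opp f : SS f -> SS (ropp (r:=Fr) f).
Proof.
  apply span_opp. intros x (h&a&H2&->). apply span_in. exists h, (ropp a).
  repeat split; auto. apply in_opp; auto. symmetry; apply E_opp.
Qed.

Lemma bet_E g h a : le (rr h) (dd g) ->
  exists g', le g' g /\ dd g' = rr h /\ bet g (E h a) = E (comp g' h) a.
Proof.
  intro H. destruct (existsD le Hog g (rr h) (G0_rr h) H) as [g' [H1 H2]].
  exists g'. repeat split; auto. unfold E. apply bet_sh; auto.
Qed.
Lemma ddrr_src (g h : Arr G) : dd g = rr h -> src g = tgt h.
Proof. unfold dd, rr. intro H. apply idm_inj; auto. Qed.

Lemma bet_BF g f : BF (dd g) f -> BF (rr g) (bet g f).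
Proof.
  revert f. apply span_ind with (Q := fun f => BF (rr g) (bet g f)).
  - destruct (bet_add g r0 r0) as (_&_&_&->). apply span_0.
  - intros x y Hx Hy. destruct (bet_add g x y) as (_&->&_). apply span_add; auto.
  - intros x (h&a&Hle&Ha&->). destruct (bet_E g h a Hle) as (g'&H1&H2&->).
    apply span_in. exists (comp g' h), a. apply ddrr_src in H2.
    repeat split. rewrite rr_comp by auto. apply le_rr; auto. rewrite dd_comp; auto. 
Qed.

Lemma bet_inv g f : BF (dd g) f -> bet (ginv g) (bet g f) = f.
Proof.
  revert f. apply span_ind with (Q := fun f => bet (ginv g) (bet g f) = f).
  - destruct (bet_add g r0 r0) as (_&_&_&->). destruct (bet_add (ginv g) r0 r0) as (_&_&_&->). auto.
  - intros x y Hx Hy. destruct (bet_add g x y) as (_&->&_).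
    destruct (bet_add (ginv g) (bet g x) (bet g y)) as (_&->&_). congruence.
  - intros x (h&a&Hle&Ha&->). destruct (bet_E g h a Hle) as (g'&H1&H2&->).
    pose proof (ddrr_src _ _ H2) as Hc'.
    unfold E. rewrite (bet_sh (ginv g) (ginv g')).
    + rewrite comp_inv_r_assoc; auto.
    + apply le_inv; auto.
    + rewrite dd_inv, rr_comp; auto.
Qed.

Lemma bet_id e f : G0 e -> BF e f -> bet e f = f.
Proof.
  intro He. revert f. apply span_ind with (Q := fun f => bet e f = f).
  - destruct (bet_add e r0 r0) as (_&_&_&->). auto.
  - intros x y Hx Hy. destruct (bet_add e x y) as (_&->&_). congruence.
  - intros x (h&a&Hle&Ha&->). unfold E. rewrite (bet_sh e (rr h)).
    + rewrite comp_rr_l; auto.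
    + auto.
    + apply dd_rr.
Qed.

Lemma bet_comp g h f : src g = tgt h -> BF (dd h) f -> bet g (bet h f) = bet (comp g h) f.
Proof.
  intro Hgh. revert f. apply span_ind with (Q := fun f => bet g (bet h f) = bet (comp g h) f).
  - destruct (bet_add h r0 r0) as (_&_&_&->). destruct (bet_add g r0 r0) as (_&_&_&->).
    destruct (bet_add (comp g h) r0 r0) as (_&_&_&->). auto.
  - intros x y Hx Hy. destruct (bet_add h x y) as (_&->&_).
    destruct (bet_add g (bet h x) (bet h y)) as (_&->&_).
    destruct (bet_add (comp g h) x y) as (_&->&_). congruence.
  - intros x (k&a&Hle&Ha&->). destruct (bet_E h k a Hle) as (h1&H1&H2&->).
    pose proof (ddrr_src _ _ H2) as Hc1.
    assert (Hle2 : le (rr (comp h1 k)) (dd g)).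
    { rewrite rr_comp by auto. unfold dd. rewrite Hgh. apply le_rr; auto. }
    destruct (bet_E g (comp h1 k) a Hle2) as (g1&G1&G2&->).
    pose proof (ddrr_src _ _ G2) as Hc2. rewrite rr_comp in G2 by auto.
    pose proof (ddrr_src _ _ G2) as Hc3.
    unfold E. rewrite (bet_sh (comp g h) (comp g1 h1)).
    + rewrite compA; auto.
    + apply le_comp; auto.
    + rewrite dd_comp; auto.
Qed.

Lemma bet_le g h f : le g h -> BF (dd g) f -> bet g f = bet h f.
Proof.
  intro Hgh. revert f. apply span_ind with (Q := fun f => bet g f = bet h f).
  - destruct (bet_add h r0 r0) as (_&_&_&->). destruct (bet_add g r0 r0) as (_&_&_&->). auto.
  - intros x y Hx Hy. destruct (bet_add h x y) as (_&->&_).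
    destruct (bet_add g x y) as (_&->&_). congruence.
  - intros x (k&a&Hle&Ha&->). destruct (bet_E g k a Hle) as (g1&G1&G2&->).
    unfold E. rewrite (bet_sh h g1); auto. eapply le_trans; eauto.
Qed.
Definition Bc : Type := {f : Fr | SS f}.
Lemma val_inj (x y : Bc) : proj1_sig x = proj1_sig y -> x = y.
Proof.
  destruct x as [x Hx], y as [y Hy]; simpl; intro; subst. f_equal. apply proof_irrelevance.
Qed.
Lemma SS_0 : SS r0. Proof. apply span_0. Qed.
Lemma SS_add f f' : SS f -> SS f' -> SS (radd (r:=Fr) f f'). Proof. apply span_add. Qed.

Definition Br : Rng.
Proof.
  refine {| rcar := Bc; r0 := exist _ (r0 (r:=Fr)) SS_0;
    radd := fun x y => exist _ (radd (proj1_sig x) (proj1_sig y)) (SS_add _ _ (proj2_sig x) (proj2_sig y));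
    ropp := fun x => exist _ (ropp (proj1_sig x)) (S_opp _ (proj2_sig x));
    rmul := fun x y => exist _ (rmul (proj1_sig x) (proj1_sig y)) (S_mul _ _ (proj2_sig x) (proj2_sig y)) |};
  intros; apply val_inj; cbn [proj1_sig].
  apply (raddA (r:=Fr)). apply (raddC (r:=Fr)). apply (radd0 (r:=Fr)). apply (raddN (r:=Fr)).
  apply (rmulA (r:=Fr)). apply (rmulDl (r:=Fr)). apply (rmulDr (r:=Fr)).
Defined.

Definition beB (g : Arr G) (b : Br) : Br :=
  match excluded_middle_informative (SS (bet g (proj1_sig b))) with
  | left H => exist _ _ H
  | right _ => r0
  end.
Definition phiB (e : Arr G) (a : A) : Br :=
  match excluded_middle_informative (SS (E e a)) with
  | left H => exist _ _ H
  | right _ => r0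
  end.
Definition BsetB (g : Arr G) (b : Br) : Prop := BF (rr g) (proj1_sig b).

Lemma val_beB g (b : Br) : SS (bet g (proj1_sig b)) -> proj1_sig (beB g b) = bet g (proj1_sig b).
Proof. intro H. unfold beB. destruct (excluded_middle_informative _); simpl; tauto. Qed.
Lemma val_phiB e a : SS (E e a) -> proj1_sig (phiB e a) = E e a.
Proof. intro H. unfold phiB. destruct (excluded_middle_informative _); simpl; tauto. Qed.
Lemma E_SS h a : Aset (dd h) a -> SS (E h a).
Proof. intro H. apply span_in. exists h, a; auto. Qed.
Lemma E_BF e h a : le (rr h) e -> Aset (dd h) a -> BF e (E h a).
Proof. intros. apply span_in. exists h, a; auto. Qed.
Lemma val_phiB_G0 e a : G0 e -> Aset e a -> proj1_sig (phiB e a) = E e a.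
Proof. intros He Ha. apply val_phiB. apply E_SS. rewrite G0_dd_id; auto. Qed.
Lemma val_beB_BF g (b : Br) : BF (dd g) (proj1_sig b) -> proj1_sig (beB g b) = bet g (proj1_sig b).
Proof. intro H. apply val_beB. eapply BF_S. apply bet_BF; eauto. Qed.
Lemma phiB_dd h a : Aset (dd h) a -> proj1_sig (beB h (phiB (dd h) a)) = E h a.
Proof.
  intro Ha. rewrite val_beB_BF; rewrite val_phiB_G0; auto using G0_dd.
  - unfold E. rewrite (bet_sh h h). apply f_equal2; auto. apply comp_dd_r. apply le_refl; auto.
    symmetry; apply rr_dd.
  - apply E_BF; auto. rewrite rr_dd. apply le_refl; auto. rewrite dd_dd; auto.
Qed.

Lemma span_transfer (P : Fr -> Prop) (HP : forall f, P f -> SS f) (b : Br) :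
  span (R:=Fr) P (proj1_sig b) <-> span (R:=Br) (fun z => P (proj1_sig z)) b.
Proof.
  split.
  - intros [l [Hl Hb]]. revert b Hb. induction Hl as [|x l Hx Hl IH]; intros b Hb.
    + replace b with (r0 (r:=Br)). apply span_0. apply val_inj. simpl. auto.
    + assert (HSl : SS (fsum l)).
      { apply span_span. apply (span_mono P). intros; apply HP; auto. exists l; auto. }
      set (bx := exist SS x (HP x Hx) : Br).
      set (bl := exist SS (fsum l) HSl : Br).
      replace b with (radd bx bl). apply span_add. apply span_in; auto. apply IH; auto.
      apply val_inj. simpl. auto.
  - revert b. apply span_ind. apply span_0.
    intros x y Hx Hy. apply (span_add (R:=Fr)); auto.
    intros x Hx. apply span_in; auto.
Qed.

Lemma ideal_self (R : Rng) (I : R -> Prop) : is_ideal I -> is_ideal_in I I.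
Proof.
  intros (_&H0&H1&H2&H3). repeat split; auto; apply H3; auto.
Qed.

Lemma B_ideal e : is_ideal (fun b : Br => BF e (proj1_sig b)).
Proof.
  split; [auto|]. split; [apply span_0|]. split; [intros x y Hx Hy; apply span_add; auto|].
  split; [intros x Hx; apply BF_opp; auto|].
  intros x y _ Hy. split.
  - apply BF_mul_l; auto. apply (proj2_sig x).
  - apply BF_mul_r; auto. apply (proj2_sig x).
Qed.

Lemma Xm_id e a : G0 e -> Aset e a -> Xm e e a = a.
Proof.
  intros He Ha. unfold Xm. rewrite comp_inv_l.
  fold (dd e). rewrite G0_dd_id by auto. rewrite G0_inv by auto.
  rewrite (proj1 (in_iff _ _) Ha). apply al_id; auto.
Qed.

Lemma iii_F g a : Aset (ginv g) a -> E g a = E (rr g) (al g a).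
Proof.
  intro Ha. apply F_ext; intro k. destruct (classic (rr k = rr g)) as [Hk|Hk].
  - rewrite !E_at by (rewrite ?rr_rr; auto). unfold rr at 1. rewrite ginv_idm.
    apply rr_eq in Hk. rewrite <- Hk. rewrite comp_idl.
    symmetry. apply psi_Q2; auto.
  - rewrite !E_off by (rewrite ?rr_rr; auto). auto.
Qed.

Lemma BF_E_ideal e a f : G0 e -> Aset e a -> BF e f ->
  (exists c, Aset e c /\ rmul (r:=Fr) f (E e a) = E e c) /\
  (exists c, Aset e c /\ rmul (r:=Fr) (E e a) f = E e c).
Proof.
  intros He Ha. revert f. apply span_ind.
  - split; exists r0; split; auto using in_0; rewrite E_0.
    apply (rmul0r (R:=Fr)). apply (rmulr0 (R:=Fr)).
  - intros x y [[c1 [Hc1 E1]] [d1 [Hd1 F1]]] [[c2 [Hc2 E2]] [d2 [Hd2 F2]]].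
    split; [exists (radd c1 c2) | exists (radd d1 d2)]; split; auto using in_add;
    rewrite E_add. rewrite rmulDl; congruence. rewrite rmulDr; congruence.
  - intros x (h&a'&Hle&Ha'&->).
    destruct (classic (rr h = rr e)) as [Hr|Hr].
    + destruct (E_mul h e a' a Hr) as [M1 M2]. split.
      * exists (rmul (Xm h e a') a). split; auto. apply in_mul_l; auto.
      * exists (rmul a (Xm h e a')). split; auto. apply in_mul_r; auto.
    + split; exists r0; split; auto using in_0; rewrite E_0.
      apply E_mul0; auto. apply E_mul0; auto.
Qed.
Lemma BsetB_inv g (b : Br) : BsetB (ginv g) b <-> BF (dd g) (proj1_sig b).
Proof. unfold BsetB. rewrite rr_inv. tauto. Qed.

Lemma B_partial : partial_action BsetB beB.
Proof.
  split; [|split; [|split; [|split; [|split; [|split]]]]].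
  - intro g. apply B_ideal.
  - intro g. unfold BsetB. rewrite rr_rr. apply ideal_self. apply B_ideal.
  - intro g. split; [split; [|split; [|split]]|].
    + intros x Hx. apply BsetB_inv in Hx. unfold BsetB. rewrite val_beB_BF; auto. apply bet_BF; auto.
    + intros x y Hx Hy. apply BsetB_inv in Hx, Hy. apply val_inj.
      rewrite val_beB_BF by (apply span_add; auto).
      change (proj1_sig (radd (beB g x) (beB g y))) with
        (radd (r:=Fr) (proj1_sig (beB g x)) (proj1_sig (beB g y))).
      rewrite !val_beB_BF by auto. apply (bet_add g).
    + intros x y Hx Hy. apply BsetB_inv in Hx, Hy. apply val_inj.
      rewrite val_beB_BF by (apply BF_mul_l; auto; apply (proj2_sig x)).
      change (proj1_sig (rmul (beB g x) (beB g y))) with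
        (rmul (r:=Fr) (proj1_sig (beB g x)) (proj1_sig (beB g y))).
      rewrite !val_beB_BF by auto. apply (bet_add g).
    + intros x y Hx Hy Hxy. apply BsetB_inv in Hx, Hy. apply val_inj.
      assert (E1 : proj1_sig x = bet (ginv g) (proj1_sig (beB g x)))
        by (rewrite val_beB_BF by auto; symmetry; apply bet_inv; auto).
      assert (E2 : proj1_sig y = bet (ginv g) (proj1_sig (beB g y)))
        by (rewrite val_beB_BF by auto; symmetry; apply bet_inv; auto).
      rewrite E1, E2, Hxy. reflexivity.
    + intros y Hy. unfold BsetB in Hy.
      assert (Hy' : BF (dd (ginv g)) (proj1_sig y)) by (rewrite dd_inv; auto).
      exists (beB (ginv g) y). split.
      * apply BsetB_inv. rewrite val_beB_BF by auto. rewrite <- rr_inv. apply bet_BF; auto.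
      * apply val_inj. rewrite val_beB_BF. rewrite val_beB_BF by auto.
        pose proof (bet_inv (ginv g) (proj1_sig y) Hy') as HH. rewrite ginv_ginv in HH. auto.
        rewrite val_beB_BF by auto. rewrite <- rr_inv. apply bet_BF; auto.
  - intros e He b Hb. unfold BsetB in Hb. rewrite G0_rr_id in Hb by auto.
    apply val_inj. rewrite val_beB_BF. apply bet_id; auto. rewrite G0_dd_id; auto.
  - intro b.
    assert (HP : forall f, (exists e, G0 e /\ BF (rr e) f) -> SS f)
      by (intros f (e&_&H); eapply BF_S; eauto).
    apply (span_mono (R:=Br) (fun z : Br => exists e, G0 e /\ BF (rr e) (proj1_sig z))).
    + intros x (e&He&H). exists e. split; auto.
    + apply (proj1 (span_transfer _ HP b)).
      apply (span_mono gen). intros x Hx. destruct (gen_G0 x Hx) as (e&He&H).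
      exists e. rewrite G0_rr_id; auto. apply (proj2_sig b).
  - intros g h Hgh b Hb _ _. apply BsetB_inv. apply BsetB_inv in Hb.
    rewrite dd_comp; auto.
  - intros g h Hgh b Hb Hb2 _. apply BsetB_inv in Hb. apply BsetB_inv in Hb2.
    apply val_inj.
    rewrite (val_beB_BF (comp g h) b) by (rewrite dd_comp; auto).
    rewrite (val_beB_BF g (beB h b)) by auto.
    rewrite (val_beB_BF h b) by auto.
    apply bet_comp; auto.
Qed.

Lemma globalization_exists : has_globalization le Aset al.
Proof.
  exists Br, BsetB, beB, phiB.
  split; [|split; [|split; [|split; [|split]]]].
  -
    split; [apply B_partial|split].
    + intros g x. unfold BsetB. rewrite rr_rr. tauto.
    + intros g h Hgh. split.
      * intros x Hx. unfold BsetB in *. eapply BF_mono; eauto. apply le_rr; auto.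
      * intros x Hx. apply BsetB_inv in Hx. apply val_inj.
        rewrite !val_beB_BF; auto. apply bet_le; auto.
        eapply BF_mono; eauto. apply le_dd; auto.
  -
    intros e He. split; [|split; [|split]].
    + intros a Ha. unfold BsetB. rewrite val_phiB_G0; auto. apply E_BF. apply le_refl; auto.
      rewrite G0_dd_id; auto.
    + intros a b Ha Hb. apply val_inj.
      change (proj1_sig (radd (phiB e a) (phiB e b))) with
        (radd (r:=Fr) (proj1_sig (phiB e a)) (proj1_sig (phiB e b))).
      rewrite !val_phiB_G0; auto using in_add.
      apply E_add.
    + intros a b Ha Hb. apply val_inj.
      change (proj1_sig (rmul (phiB e a) (phiB e b))) with
        (rmul (r:=Fr) (proj1_sig (phiB e a)) (proj1_sig (phiB e b))).
      rewrite !val_phiB_G0; auto using in_mul_l.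
      rewrite (proj1 (E_mul e e a b eq_refl)). rewrite Xm_id; auto.
    + intros a b Ha Hb Hab. apply (f_equal (@proj1_sig _ _)) in Hab.
      rewrite !val_phiB_G0 in Hab; auto.
      apply (f_equal (fun f : Fr => f e)) in Hab.
      rewrite !E_at in Hab by auto. rewrite comp_inv_l in Hab. fold (dd e) in Hab.
      rewrite G0_dd_id in Hab by auto. rewrite !psi_id in Hab; auto.
  -
    intros e He. split; [|split; [|split; [|split]]].
    + intros x (a&Ha&->). unfold BsetB. rewrite val_phiB_G0; auto. apply E_BF.
      apply le_refl; auto. rewrite G0_dd_id; auto.
    + exists r0. split. apply in_0. apply val_inj. rewrite val_phiB_G0; auto using in_0.
      rewrite E_0. reflexivity.
    + intros x y (a&Ha&->) (b&Hb&->). exists (radd a b). split. apply in_add; auto.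
      apply val_inj.
      change (proj1_sig (radd (phiB e a) (phiB e b))) with
        (radd (r:=Fr) (proj1_sig (phiB e a)) (proj1_sig (phiB e b))).
      rewrite !val_phiB_G0; auto using in_add. symmetry; apply E_add.
    + intros x (a&Ha&->). exists (ropp a). split. apply in_opp; auto.
      apply val_inj.
      change (proj1_sig (ropp (phiB e a))) with (ropp (r:=Fr) (proj1_sig (phiB e a))).
      rewrite !val_phiB_G0; auto using in_opp. symmetry; apply E_opp.
    + intros x y Hx (a&Ha&->). unfold BsetB in Hx. rewrite G0_rr_id in Hx by auto.
      destruct (BF_E_ideal e a (proj1_sig x) He Ha Hx) as [(c1&Hc1&E1) (c2&Hc2&E2)]. split.
      * exists c1. split; auto. apply val_inj.
        change (proj1_sig (rmul x (phiB e a))) with (rmul (r:=Fr) (proj1_sig x) (proj1_sig (phiB e a))).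
        rewrite !val_phiB_G0; auto.
      * exists c2. split; auto. apply val_inj.
        change (proj1_sig (rmul (phiB e a) x)) with (rmul (r:=Fr) (proj1_sig (phiB e a)) (proj1_sig x)).
        rewrite !val_phiB_G0; auto.
  -
    intros g y. split.
    + intros (b&Hb&->). split.
      * exists b. split; auto. apply rr_sub; auto.
      * exists (phiB (dd g) (al (ginv g) b)). split.
        -- exists (al (ginv g) b). split; auto. apply inv_sub. apply al_in. rewrite ginv_ginv; auto.
        -- apply val_inj. rewrite phiB_dd. rewrite val_phiB_G0; auto using G0_rr, rr_sub.
           rewrite (iii_F g). rewrite al_inv'; auto. apply al_in. rewrite ginv_ginv; auto.
           apply inv_sub. apply al_in. rewrite ginv_ginv; auto.
    + intros [(b&Hb&->) (x&(a&Ha&->)&Hy)]. exists b. split; auto.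
      apply (f_equal (@proj1_sig _ _)) in Hy.
      rewrite phiB_dd in Hy by auto. rewrite val_phiB_G0 in Hy; auto using G0_rr.
      apply (f_equal (fun f : Fr => f (rr g))) in Hy.
      rewrite !E_at in Hy by (rewrite ?rr_rr; auto).
      assert (Hr1 : comp (ginv (rr g)) (rr g) = rr g).
      { rewrite G0_inv by apply G0_rr. unfold rr. rewrite <- (tgt_idm (tgt g)) at 1. apply comp_idl. }
      assert (Hr2 : comp (ginv g) (rr g) = ginv g).
      { unfold rr. rewrite <- (src_inv g). apply comp_idr. }
      rewrite Hr1, Hr2 in Hy. rewrite psi_id in Hy; auto using G0_rr.
      rewrite Hy. pose proof (psi_in a (ginv g)) as HH. rewrite ginv_ginv in HH. exact HH.
  -
    intros g a Ha. apply val_inj. rewrite phiB_dd by (apply inv_sub; auto).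
    rewrite val_phiB_G0; auto using G0_rr. apply iii_F; auto. apply rr_sub, al_in; auto.
  -
    intros g y. unfold BsetB, BF.
    assert (HP : forall f, genle (rr g) f -> SS f) by (intros f Hf; eapply genle_gen in Hf; apply span_in; auto).
    rewrite (span_transfer _ HP y).
    split; apply span_mono.
    + intros z (h&a&H1&H2&H3). exists h, a. repeat split; auto. apply val_inj.
      rewrite phiB_dd; auto.
    + intros z (h&a&H1&H2&->). exists h, a. repeat split; auto. rewrite phiB_dd; auto.
Qed.
End PA.

Section Conv.
Context {G : groupoid} {A : Rng} (le : Arr G -> Arr G -> Prop)
  (Aset : Arr G -> A -> Prop) (al : Arr G -> A -> A).
Hypothesis Hpa : partial_action Aset al.
Hypothesis Hpu : preunital Aset.

Lemma unit_comm (B : Rng) (Bs : Arr G -> B -> Prop) (phi : Arr G -> A -> B) e u :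
  G0 e -> ring_mono_on (phi e) (Aset e) (Bs e) ->
  is_ideal_in (Bs e) (image (phi e) (Aset e)) ->
  Aset e u -> (forall x, Aset e x -> rmul u x = x /\ rmul x u = x) ->
  forall b, Bs e b -> rmul b (phi e u) = rmul (phi e u) b.
Proof.
  intros He (Hin&Hadd&Hmul&Hinj) (_&_&_&_&Hid) Hu Hunit b Hb.
  destruct (Hid b (phi e u) Hb (ex_intro _ u (conj Hu eq_refl))) as [(y1&Hy1&E1) (y2&Hy2&E2)].
  assert (L1 : rmul (phi e u) (rmul b (phi e u)) = rmul b (phi e u)).
  { rewrite E1. rewrite <- Hmul by auto. f_equal. apply Hunit; auto. }
  assert (L2 : rmul (rmul (phi e u) b) (phi e u) = rmul (phi e u) b).
  { rewrite E2. rewrite <- Hmul by auto. f_equal. apply Hunit; auto. }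
  rewrite <- L1, <- L2 at 1. rewrite rmulA. reflexivity.
Qed.

Lemma glob_unital : has_globalization le Aset al -> unital_action Aset.
Proof.
  intros (B&Bs&be&phi&(Hpb&Hglob&_)&Hmono&Hi1&Hii&_&_) g.
  destruct Hpb as (_&_&Hiso&_).
  destruct Hpa as (HAid&HAin&_).
  destruct (Hpu (rr g) (G0_rr g)) as (u1&Hu1&Hun1&Hc1&Hid1).
  destruct (Hpu (dd g) (G0_dd g)) as (u2&Hu2&Hun2&Hc2&Hid2).
  pose proof (Hmono (rr g) (G0_rr g)) as (MRin&MRadd&MRmul&MRinj).
  pose proof (Hmono (dd g) (G0_dd g)) as (MDin&MDadd&MDmul&MDinj).
  destruct (Hiso g) as ((Iin&Iadd&Imul&Iinj)&Isurj).
  assert (Binv : forall x, Bs (ginv g) x <-> Bs (dd g) x).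
  { intro x. rewrite Hglob. rewrite rr_inv. tauto. }
  assert (Bg : forall x, Bs g x <-> Bs (rr g) x) by (intro; apply Hglob).
  set (q := be g (phi (dd g) u2)).
  assert (Hq : Bs (rr g) q) by (apply Bg, Iin, Binv, MDin; auto).
  pose proof (Hi1 (rr g) (G0_rr g)) as HIR.
  pose proof (Hi1 (dd g) (G0_dd g)) as HID.
  destruct HIR as (_&_&_&_&HIRm).
  destruct (HIRm q (phi (rr g) u1) Hq (ex_intro _ u1 (conj Hu1 eq_refl))) as [_ (c&Hc&Ec)].
  assert (F6 : forall y, Aset (rr g) y -> rmul (phi (rr g) u1) (phi (rr g) y) = phi (rr g) y).
  { intros y Hy. rewrite <- MRmul by auto. f_equal. apply Hun1; auto. }
  assert (F6' : forall y, Aset (rr g) y -> rmul (phi (rr g) y) (phi (rr g) u1) = phi (rr g) y).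
  { intros y Hy. rewrite <- MRmul by auto. f_equal. apply Hun1; auto. }
  assert (F7D : forall b, Bs (dd g) b -> rmul b (phi (dd g) u2) = rmul (phi (dd g) u2) b).
  { apply (unit_comm B Bs phi (dd g) u2); auto using G0_dd. }
  assert (F8 : forall b, Bs (rr g) b -> rmul q b = rmul b q).
  { intros b Hb. destruct (Isurj b (proj2 (Bg b) Hb)) as (w&Hw&<-).
    unfold q. rewrite <- !Imul; auto. f_equal. symmetry; apply F7D. apply Binv; auto.
    apply Binv, MDin; auto. apply Binv, MDin; auto. }
  assert (F9 : rmul q q = q).
  { unfold q. rewrite <- Imul by (apply Binv, MDin; auto). rewrite <- MDmul by auto.
    rewrite Hid2. reflexivity. }
  assert (Hcomp : forall y, Aset (rr g) y -> phi (rr g) (rmul y c) = rmul (phi (rr g) y) q).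
  { intros y Hy. rewrite MRmul by auto. rewrite <- Ec. rewrite rmulA. rewrite F6'; auto. }
  assert (Hrg_ideal : forall a y, Aset (rr g) y -> Aset (rr g) (rmul a y) /\ Aset (rr g) (rmul y a)).
  { intros a y Hy. destruct (HAid g) as (_&_&_&_&H). apply H; auto. }
  assert (HrgL : forall a y, Aset (rr g) y -> Aset (rr g) (rmul a y)) by (intros a y Hy; apply (proj1 (Hrg_ideal a y Hy))).
  assert (HrgR : forall a y, Aset (rr g) y -> Aset (rr g) (rmul y a)) by (intros a y Hy; apply (proj2 (Hrg_ideal a y Hy))).
  assert (Hcu : rmul u1 c = c) by (apply Hun1; auto).
  exists c. split; [|split].
  -
    assert (Hy : forall y, Aset (rr g) y -> rmul y c = rmul c y).
    { intros y Hy. apply MRinj; auto.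
      rewrite Hcomp by auto. rewrite MRmul by auto. rewrite <- Ec.
      rewrite <- rmulA. rewrite F8 by (apply MRin; auto). rewrite rmulA. rewrite F6; auto. }
    intro a. rewrite <- Hcu. rewrite rmulA. rewrite (Hy (rmul a u1)).
    rewrite <- rmulA. rewrite <- Hc1. rewrite rmulA. reflexivity.
    auto.
  -
    apply MRinj; auto. rewrite Hcomp by auto.
    rewrite <- Ec. rewrite <- rmulA. rewrite F9. reflexivity.
  - intro x. split.
    + intro Hx. exists x.
      assert (HxR : Aset (rr g) x) by (apply (HAin g); auto).
      destruct (proj1 (Hii g (phi (rr g) x)) (ex_intro _ x (conj Hx eq_refl)))
        as [_ (z&(a&Ha&->)&Hz)].
      symmetry. apply MRinj; auto.
      rewrite Hcomp by auto. rewrite Hz. unfold q.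
      rewrite <- Imul by (apply Binv, MDin; auto). rewrite <- MDmul by auto.
      f_equal. f_equal. apply Hun2; auto.
    + intros (a&->).
      assert (HaR : Aset (rr g) (rmul a u1)) by auto.
      assert (Hx : rmul a c = rmul (rmul a u1) c) by (rewrite <- rmulA, Hcu; auto).
      assert (HxR : Aset (rr g) (rmul a c)) by auto.
      assert (Him : image (phi (rr g)) (Aset g) (phi (rr g) (rmul a c))).
      { apply Hii. split. exists (rmul a c); auto.
        rewrite Hx, Hcomp by auto.
        destruct (Isurj (phi (rr g) (rmul a u1))) as (w&Hw&Hw2).
        { apply Bg, MRin; auto. }
        rewrite <- Hw2. unfold q. rewrite <- Imul by (auto; apply Binv, MDin; auto).
        destruct HID as (_&_&_&_&HIDm).
        destruct (HIDm w (phi (dd g) u2) (proj1 (Binv w) Hw) (ex_intro _ u2 (conj Hu2 eq_refl)))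
          as [(a'&Ha'&E') _].
        exists (rmul w (phi (dd g) u2)). split; auto. exists a'; auto. }
      destruct Him as (x'&Hx'&E'). rewrite (MRinj (rmul a c) x'); auto.
      apply (HAin g); auto.
Qed.
End Conv.

Theorem mainTheorem1 (G : groupoid) (le : Arr G -> Arr G -> Prop) (A : Rng)
    (Aset : Arr G -> A -> Prop) (al : Arr G -> A -> A) :
  ordered_groupoid le ->
  po_action le Aset al ->
  preunital Aset ->
  (has_globalization le Aset al <-> unital_action Aset).
Proof.
  intros Hog [Hpa _] Hpu. split.
  - apply glob_unital; auto.
  - intro Hu.
    set (one := fun g => proj1_sig (constructive_indefinite_description _ (Hu g))).
    assert (Hone : forall g, central (one g) /\ rmul (one g) (one g) = one g /\
      (forall x, Aset g x <-> exists a, x = rmul a (one g))).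
    { intro g. unfold one. destruct (constructive_indefinite_description _ (Hu g)) as [u Hu']. exact Hu'. }
    apply (globalization_exists Aset al Hpa one); auto; intro g; apply Hone.
Qed.
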